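(* Let $\operatorname{sinc}(0)=1$ and $\operatorname{sinc}(t)=\frac{\sin(\pi t)}{\pi t}$ for $t\neq0$, and for a signal $x:\mathbb{R}\to\mathbb{C}$ define the Whittaker cylinder interpolation \[ Fx(t,\varphi)=\sum_{\tau\in\varphi} x(\tau)\operatorname{sinc}(t-\tau):=\lim_{N\to\infty}\sum_{\tau\in\varphi\cap[-N,N]} x(\tau)\operatorname{sinc}(t-\tau). \] Let $a=b+n$ with $n\in\mathbb{Z}$ and $b\in(-\tfrac12,\tfrac12)$, and let $x(t)=\exp(2\pi i\,a t)$. Then for all $t\in\mathbb{R}$ and $\varphi\in\mathbb{T}$, \[ Fx(t,\varphi)=\exp\!\big(2\pi i\,(b\,t+n\,\rho(\varphi))\big). \] Consequently, for any reals $v,\alpha$, the signal $z(t)=Fx(v t, c(\alpha t))$ satisfies $z(t)=\exp\!\big(2\pi i\,(b v+n\alpha)\,t\big)$ for all $t\in\mathbb{R}$.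
   Context: $\mathbb{T}=\mathbb{R}/\mathbb{Z}$; $c:\mathbb{R}\to\mathbb{T}$, $c(p)=p+\mathbb{Z}$; an element $\varphi\in\mathbb{T}$ is regarded as the set of reals $\tau$ with $c(\tau)=\varphi$; $\rho:\mathbb{T}\to[0,1)$ picks the unique representative of $\varphi$ in $[0,1)$. *)

(* Defs.v *)
From Stdlib Require Import Reals ZArith List.
Open Scope R_scope.

Definition C : Type := (R * R)%type.
Definition Cadd (u v : C) : C := (fst u + fst v, snd u + snd v).
Definition Cscal (r : R) (u : C) : C := (r * fst u, r * snd u).
Definition C0 : C := (0, 0).

Definition cexp2pi (theta : R) : C := (cos (2 * PI * theta), sin (2 * PI * theta)).

Definition sinc (t : R) : R :=
  if Req_EM_T t 0 then 1 else sin (PI * t) / (PI * t).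

(* floor via Stdlib's Int_part (= up r - 1, the greatest integer <= r) *)
Definition Zfloor (r : R) : Z := Int_part r.

(* An element phi of T = R/Z is represented by any real p with c(p) = phi;
   phi, as a set of reals, is { p + k | k in Z }. *)
Definition in_class (p tau : R) : Prop := exists k : Z, tau = p + IZR k.

(* rho(c(p)) : the representative of c(p) in [0,1) *)
Definition rho (p : R) : R := p - IZR (Zfloor p).

Fixpoint zrange (lo : Z) (len : nat) : list Z :=
  match len with
  | O => nil
  | S m => lo :: zrange (lo + 1)%Z m
  end.

(* Partial sum  sum_{tau in phi ∩ [-N,N]} x(tau) sinc(t - tau), phi = c(p).
   The integer window below contains every k with -N <= p+k <= N. *)
Definition cyl_partial (x : R -> C) (t p : R) (N : nat) : C :=
  fold_right
    (fun k acc =>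
       let tau := p + IZR k in
       if Rle_dec (- INR N) tau then
         if Rle_dec tau (INR N) then Cadd (Cscal (sinc (t - tau)) (x tau)) acc
         else acc
       else acc)
    C0
    (zrange (- Z.of_nat N - Zfloor p - 1)%Z (2 * N + 3)).

(* Fx(t, c(p)) = L : the partial sums converge (as N -> oo) to L. *)
Definition cyl_interp_is (x : R -> C) (t p : R) (L : C) : Prop :=
  Un_cv (fun N => fst (cyl_partial x t p N)) (fst L) /\
  Un_cv (fun N => snd (cyl_partial x t p N)) (snd L).

(* Main.v *)
Require Import Defs.
From Stdlib Require Import Reals ZArith Lra Lia List.
Open Scope R_scope.

Fixpoint wsum (f : Z -> R) (m : Z) (L : nat) : R :=
  match L with O => 0 | S L' => f m + wsum f (m+1)%Z L' end.

Lemma wsum_cons f m L : wsum f m (S L) = f m + wsum f (m+1)%Z L.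
Proof. reflexivity. Qed.

Lemma wsum_ext f g m L :
  (forall k, (m <= k < m + Z.of_nat L)%Z -> f k = g k) -> wsum f m L = wsum g m L.
Proof.
  revert m; induction L as [|L IH]; intros m H; simpl; [reflexivity|].
  rewrite (H m) by lia. rewrite (IH (m+1)%Z); [reflexivity|].
  intros k Hk; apply H; lia.
Qed.

Lemma wsum_plus f g m L : wsum (fun k => f k + g k) m L = wsum f m L + wsum g m L.
Proof. revert m; induction L as [|L IH]; intros m; simpl; [lra|]. rewrite IH; lra. Qed.

Lemma wsum_minus f g m L : wsum (fun k => f k - g k) m L = wsum f m L - wsum g m L.
Proof. revert m; induction L as [|L IH]; intros m; simpl; [lra|]. rewrite IH; lra. Qed.

Lemma wsum_scal c f m L : wsum (fun k => c * f k) m L = c * wsum f m L.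
Proof. revert m; induction L as [|L IH]; intros m; simpl; [lra|]. rewrite IH; lra. Qed.

Lemma wsum_zero f m L : (forall k, (m <= k < m + Z.of_nat L)%Z -> f k = 0) -> wsum f m L = 0.
Proof.
  intro H. rewrite (wsum_ext f (fun _ => 0)) by exact H.
  clear H; revert m; induction L as [|L IH]; intros m; simpl; [lra|]. rewrite IH; lra.
Qed.

Lemma wsum_app f m L1 L2 :
  wsum f m (L1 + L2) = wsum f m L1 + wsum f (m + Z.of_nat L1) L2.
Proof.
  revert m; induction L1 as [|L1 IH]; intros m; simpl.
  - replace (m + 0)%Z with m by lia; lra.
  - rewrite IH. replace (m + 1 + Z.of_nat L1)%Z with (m + Z.pos (Pos.of_succ_nat L1))%Z by lia. lra.
Qed.

Lemma wsum_snoc f m L : wsum f m (S L) = wsum f m L + f (m + Z.of_nat L)%Z.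
Proof.
  replace (S L) with (L + 1)%nat by lia. rewrite wsum_app. simpl. lra.
Qed.

Lemma wsum_shift f n m L : wsum (fun k => f (k + n)%Z) m L = wsum f (m + n) L.
Proof.
  revert m; induction L as [|L IH]; intros m; simpl; [lra|].
  rewrite IH. replace (m + 1 + n)%Z with (m + n + 1)%Z by lia. reflexivity.
Qed.

Lemma wsum_rev f m L : wsum f m L = wsum (fun k => f (- k)%Z) (- (m + Z.of_nat L) + 1)%Z L.
Proof.
  induction L as [|L IH]; [reflexivity|].
  rewrite wsum_snoc, IH.
  replace (- (m + Z.of_nat (S L)) + 1)%Z with (- (m + Z.of_nat L))%Z by lia.
  simpl wsum at 2. replace (- (m + Z.of_nat L) + 1)%Z with (- (m + Z.of_nat L) + 1)%Z by lia.
  replace (- - (m + Z.of_nat L))%Z with (m + Z.of_nat L)%Z by lia. lra.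
Qed.

Lemma wsum_pair f m L :
  wsum f (2*m - 1)%Z (2*L) = wsum (fun k => f (2*k-1)%Z + f (2*k)%Z) m L.
Proof.
  revert m; induction L as [|L IH]; intros m; [reflexivity|].
  replace (2 * S L)%nat with (S (S (2*L))) by lia. rewrite !wsum_cons.
  rewrite <- IH. replace (2 * m - 1 + 1)%Z with (2*m)%Z by lia.
  replace (2 * m + 1)%Z with (2 * (m+1) - 1)%Z by lia. lra.
Qed.

Lemma wsum_delta f m L k0 :
  (m <= k0 < m + Z.of_nat L)%Z -> (forall k, k <> k0 -> f k = 0) -> wsum f m L = f k0.
Proof.
  revert m; induction L as [|L IH]; intros m Hk Hf; [simpl in Hk; lia|].
  simpl. destruct (Z.eq_dec m k0) as [->|Hne].
  - rewrite wsum_zero. lra. intros k Hk'. apply Hf. lia.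
  - rewrite Hf by auto. rewrite IH; [lra|lia|auto].
Qed.

Definition zsum (f : Z -> R) (m1 m2 : Z) : R := wsum f m1 (Z.to_nat (m2 - m1 + 1)).

Lemma zsum_split f m1 m m2 : (m1 <= m <= m2 + 1)%Z ->
  zsum f m1 m2 = zsum f m1 (m - 1) + zsum f m m2.
Proof.
  intros H. unfold zsum.
  replace (Z.to_nat (m2 - m1 + 1)) with (Z.to_nat (m - 1 - m1 + 1) + Z.to_nat (m2 - m + 1))%nat by lia.
  rewrite wsum_app. f_equal. f_equal. lia.
Qed.

Lemma zsum_ext f g m1 m2 : (forall k, (m1 <= k <= m2)%Z -> f k = g k) -> zsum f m1 m2 = zsum g m1 m2.
Proof. intros H; unfold zsum; apply wsum_ext; intros k Hk; apply H; lia. Qed.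

Lemma IZR_le_Int_part z r : IZR z <= r <-> (z <= Int_part r)%Z.
Proof.
  destruct (base_Int_part r) as [H1 H2]. split; intro H.
  - destruct (Z_le_gt_dec z (Int_part r)) as [|Hgt]; [assumption|].
    exfalso. assert (IZR (Int_part r + 1) <= IZR z) by (apply IZR_le; lia).
    rewrite plus_IZR in H0. lra.
  - apply IZR_le in H. lra.
Qed.

Definition wm1 (N : nat) (p : R) : Z := (- Zfloor (INR N + p))%Z.
Definition wm2 (N : nat) (p : R) : Z := Zfloor (INR N - p).

Lemma window_iff N p k :
  (- INR N <= p + IZR k /\ p + IZR k <= INR N) <-> (wm1 N p <= k <= wm2 N p)%Z.
Proof.
  unfold wm1, wm2, Zfloor. split.
  - intros [H1 H2]. split.
    + assert (IZR (-k) <= INR N + p) by (rewrite opp_IZR; lra).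
      apply IZR_le_Int_part in H. unfold Int_part in *; lia.
    + apply IZR_le_Int_part. lra.
  - intros [H1 H2]. split.
    + assert (IZR (-k) <= INR N + p) by (apply IZR_le_Int_part; unfold Int_part in *; lia).
      rewrite opp_IZR in H. lra.
    + apply IZR_le_Int_part in H2. lra.
Qed.

Definition cterm (x : R -> Defs.C) (t p : R) (N : nat) (sel : Defs.C -> R) (k : Z) : R :=
  if Rle_dec (- INR N) (p + IZR k) then
    if Rle_dec (p + IZR k) (INR N) then sinc (t - (p + IZR k)) * sel (x (p + IZR k)) else 0
  else 0.

Lemma cyl_fst_w x t p N lo len :
  fst (fold_right
    (fun k acc =>
       let tau := p + IZR k in
       if Rle_dec (- INR N) tau then
         if Rle_dec tau (INR N) then Cadd (Cscal (sinc (t - tau)) (x tau)) acc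
         else acc
       else acc) C0 (zrange lo len)) = wsum (cterm x t p N fst) lo len.
Proof.
  revert lo; induction len as [|len IH]; intros lo; [reflexivity|].
  simpl. rewrite <- IH. unfold cterm.
  destruct (Rle_dec (- INR N) (p + IZR lo)); [destruct (Rle_dec (p + IZR lo) (INR N))|]; simpl; lra.
Qed.

Lemma cyl_snd_w x t p N lo len :
  snd (fold_right
    (fun k acc =>
       let tau := p + IZR k in
       if Rle_dec (- INR N) tau then
         if Rle_dec tau (INR N) then Cadd (Cscal (sinc (t - tau)) (x tau)) acc
         else acc
       else acc) C0 (zrange lo len)) = wsum (cterm x t p N snd) lo len.
Proof.
  revert lo; induction len as [|len IH]; intros lo; [reflexivity|].
  simpl. rewrite <- IH. unfold cterm.
  destruct (Rle_dec (- INR N) (p + IZR lo)); [destruct (Rle_dec (p + IZR lo) (INR N))|]; simpl; lra.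
Qed.

Lemma cterm_window x t p N sel :
  wsum (cterm x t p N sel) (- Z.of_nat N - Zfloor p - 1)%Z (2 * N + 3)
  = zsum (fun k => sinc (t - (p + IZR k)) * sel (x (p + IZR k))) (wm1 N p) (wm2 N p).
Proof.
  set (lo := (- Z.of_nat N - Zfloor p - 1)%Z).
  set (m1 := wm1 N p). set (m2 := wm2 N p).
  assert (Hb := base_Int_part p). assert (Hb1 := base_Int_part (INR N + p)).
  assert (Hb2 := base_Int_part (INR N - p)).
  assert (HN : INR N = IZR (Z.of_nat N)) by (rewrite INR_IZR_INZ; reflexivity).
  assert (Hlo : (lo <= m1)%Z).
  { unfold lo, m1, wm1, Zfloor. 
    assert (IZR (Int_part (INR N + p)) < IZR (Z.of_nat N + Int_part p + 1)).
    { rewrite !plus_IZR. lra. }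
    apply lt_IZR in H. unfold Int_part in *; lia. }
  assert (Hhi : (m2 <= lo + Z.of_nat (2 * N + 3) - 1)%Z).
  { unfold lo, m2, wm2, Zfloor. rewrite Nat2Z.inj_add, Nat2Z.inj_mul.
    assert (IZR (Int_part (INR N - p)) < IZR (Z.of_nat N - Int_part p + 1)).
    { rewrite plus_IZR, minus_IZR. lra. }
    apply lt_IZR in H. unfold Int_part in *; lia. }
  assert (Hm : (m1 <= m2 + 1)%Z).
  { unfold m1, m2, wm1, wm2, Zfloor.
    assert (IZR (-2) < IZR (Int_part (INR N - p) + Int_part (INR N + p))).
    { rewrite plus_IZR. pose proof (pos_INR N). lra. }
    apply lt_IZR in H. unfold Int_part in *; lia. }
  assert (E : wsum (cterm x t p N sel) lo (2 * N + 3) =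
    zsum (cterm x t p N sel) lo (lo + Z.of_nat (2*N+3) - 1)).
  { unfold zsum. f_equal. lia. }
  rewrite E, (zsum_split _ lo m1) by lia.
  rewrite (zsum_split _ m1 (m2+1)) by lia.
  replace (zsum (cterm x t p N sel) lo (m1 - 1)) with 0.
  2:{ symmetry. unfold zsum. apply wsum_zero. intros k Hk. unfold cterm.
      destruct (Rle_dec (- INR N) (p + IZR k)) as [h1|]; [|reflexivity].
      destruct (Rle_dec (p + IZR k) (INR N)) as [h2|]; [|reflexivity].
      exfalso. assert (Hw := proj1 (window_iff N p k) (conj h1 h2)). fold m1 in Hw. lia. }
  replace (zsum (cterm x t p N sel) (m2 + 1) (lo + Z.of_nat (2 * N + 3) - 1)) with 0.
  2:{ symmetry. unfold zsum. apply wsum_zero. intros k Hk. unfold cterm.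
      destruct (Rle_dec (- INR N) (p + IZR k)) as [h1|]; [|reflexivity].
      destruct (Rle_dec (p + IZR k) (INR N)) as [h2|]; [|reflexivity].
      exfalso. assert (Hw := proj1 (window_iff N p k) (conj h1 h2)). fold m2 in Hw. lia. }
  replace (m2 + 1 - 1)%Z with m2 by lia.
  rewrite Rplus_0_l, Rplus_0_r. apply zsum_ext. intros k Hk. unfold cterm.
  assert (Hw := proj2 (window_iff N p k) Hk).
  destruct (Rle_dec (- INR N) (p + IZR k)) as [h1|h1]; [|exfalso; tauto].
  destruct (Rle_dec (p + IZR k) (INR N)) as [h2|h2]; [reflexivity|exfalso; tauto].
Qed.

Lemma cyl_fst x t p N : fst (cyl_partial x t p N) =
  zsum (fun k => sinc (t - (p + IZR k)) * fst (x (p + IZR k))) (wm1 N p) (wm2 N p).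
Proof. unfold cyl_partial. rewrite cyl_fst_w. apply cterm_window. Qed.

Lemma cyl_snd x t p N : snd (cyl_partial x t p N) =
  zsum (fun k => sinc (t - (p + IZR k)) * snd (x (p + IZR k))) (wm1 N p) (wm2 N p).
Proof. unfold cyl_partial. rewrite cyl_snd_w. apply cterm_window. Qed.

Lemma D_lin s g : derivable_pt_lim (fun x => x * s) g s.
Proof.
  apply derivable_pt_lim_ext with (f := mult_real_fct s id).
  - intro z; unfold mult_real_fct, id; ring.
  - replace s with (s * 1) at 2 by ring. apply derivable_pt_lim_scal, derivable_pt_lim_id.
Qed.

Lemma D_scal c f g l : derivable_pt_lim f g l -> derivable_pt_lim (fun x => f x * c) g (l * c).
Proof.
  intro H. apply derivable_pt_lim_ext with (f := mult_real_fct c f).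
  - intro z; unfold mult_real_fct; ring.
  - replace (l * c) with (c * l) by ring. apply derivable_pt_lim_scal, H.
Qed.

Lemma D_sin_lin s g : derivable_pt_lim (fun x => sin (x * s)) g (cos (g * s) * s).
Proof.
  apply derivable_pt_lim_ext with (f := comp sin (fun x => x * s)).
  - intro z; reflexivity.
  - apply derivable_pt_lim_comp; [apply D_lin|apply derivable_pt_lim_sin].
Qed.

Lemma D_cos_lin s g : derivable_pt_lim (fun x => cos (x * s)) g (- sin (g * s) * s).
Proof.
  apply derivable_pt_lim_ext with (f := comp cos (fun x => x * s)).
  - intro z; reflexivity.
  - apply derivable_pt_lim_comp; [apply D_lin|apply derivable_pt_lim_cos].
Qed.

Lemma D_plus f1 f2 g l1 l2 : derivable_pt_lim f1 g l1 -> derivable_pt_lim f2 g l2 ->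
  derivable_pt_lim (fun x => f1 x + f2 x) g (l1 + l2).
Proof. intros; apply derivable_pt_lim_ext with (f := (f1 + f2)%F); [intro; reflexivity|]. now apply derivable_pt_lim_plus. Qed.

Lemma D_minus f1 f2 g l1 l2 : derivable_pt_lim f1 g l1 -> derivable_pt_lim f2 g l2 ->
  derivable_pt_lim (fun x => f1 x - f2 x) g (l1 - l2).
Proof. intros; apply derivable_pt_lim_ext with (f := (f1 - f2)%F); [intro; reflexivity|]. now apply derivable_pt_lim_minus. Qed.

Lemma D_mult f1 f2 g l1 l2 : derivable_pt_lim f1 g l1 -> derivable_pt_lim f2 g l2 ->
  derivable_pt_lim (fun x => f1 x * f2 x) g (l1 * f2 g + f1 g * l2).
Proof. intros; apply derivable_pt_lim_ext with (f := (f1 * f2)%F); [intro; reflexivity|]. now apply derivable_pt_lim_mult. Qed.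

Lemma D_wsum (F : R -> Z -> R) (F' : Z -> R) g m L :
  (forall k, derivable_pt_lim (fun x => F x k) g (F' k)) ->
  derivable_pt_lim (fun x => wsum (F x) m L) g (wsum F' m L).
Proof.
  intro H. revert m; induction L as [|L IH]; intros m.
  - simpl. apply derivable_pt_lim_ext with (f := fct_cte 0); [intro; reflexivity|].
    apply derivable_pt_lim_const.
  - simpl. apply D_plus; [apply H|apply IH].
Qed.

Definition w2 (g : R) : R := / (2 * sin (g / 2)).

Lemma D_w2 g : sin (g/2) <> 0 -> derivable_pt_lim w2 g (- cos (g/2) / (2 * sin (g/2))^2).
Proof.
  intro Hs.
  assert (Hd : derivable_pt_lim (fun x => 2 * sin (x * /2)) g (cos (g * /2))).
  { apply derivable_pt_lim_ext with (f := fun x => sin (x * /2) * 2); [intro; ring|].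
    replace (cos (g * /2)) with (cos (g * /2) * /2 * 2) by field.
    apply D_scal, D_sin_lin. }
  set (f2 := fun x => 2 * sin (x * /2)).
  apply derivable_pt_lim_ext with (f := (fct_cte 1 / f2)%F).
  - intro z; unfold fct_cte, div_fct, w2, f2, Rdiv. ring.
  - replace (- cos (g/2) / (2 * sin (g/2))^2) with
      ((0 * f2 g - cos (g * /2) * fct_cte 1 g) / Rsqr (f2 g)).
    + apply derivable_pt_lim_div; [apply derivable_pt_lim_const|exact Hd|].
      unfold f2. unfold Rdiv in Hs. intro h; apply Hs; lra.
    + unfold f2, fct_cte, Rsqr. replace (g * /2) with (g/2) by (unfold Rdiv; ring). field. exact Hs.
Qed.

Lemma sin_half_lb d c : 0 < d <= PI -> d <= c <= 2 * PI - d -> 0 < sin (d/2) <= sin (c/2).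
Proof.
  intros Hd Hc. assert (HP := PI_RGT_0). split.
  - apply sin_gt_0; lra.
  - destruct (Rle_dec c PI).
    + apply sin_incr_1; lra.
    + rewrite <- (sin_PI_x (c/2)). apply sin_incr_1; lra.
Qed.

Lemma mvt_bound (G G' : R -> R) x y K :
  (forall c, Rmin x y <= c <= Rmax x y -> derivable_pt_lim G c (G' c) /\ Rabs (G' c) <= K) ->
  Rabs (G x - G y) <= K * Rabs (x - y).
Proof.
  intro H. destruct (Rtotal_order x y) as [Hxy|[Hxy|Hxy]].
  - destruct (MVT_cor2 G G' x y Hxy) as [c [Hc1 Hc2]].
    + intros c Hc. apply H. unfold Rmin, Rmax; destruct (Rle_dec x y); lra.
    + assert (Hk : Rabs (G' c) <= K) by (apply H; unfold Rmin, Rmax; destruct (Rle_dec x y); lra).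
      rewrite Rabs_minus_sym, Hc1, Rabs_mult, (Rabs_minus_sym x y).
      apply Rmult_le_compat_r; [apply Rabs_pos|exact Hk].
  - subst. rewrite !Rminus_diag, Rabs_R0. lra.
  - destruct (MVT_cor2 G G' y x Hxy) as [c [Hc1 Hc2]].
    + intros c Hc. apply H. unfold Rmin, Rmax; destruct (Rle_dec x y); lra.
    + assert (Hk : Rabs (G' c) <= K) by (apply H; unfold Rmin, Rmax; destruct (Rle_dec x y); lra).
      rewrite Hc1, Rabs_mult. rewrite (Rabs_minus_sym x y).
      apply Rmult_le_compat_r; [apply Rabs_pos|exact Hk].
Qed.

Definition dlt (g : R) : R := Rmin g (2 * PI - g).
Definition Kc (g : R) : R := Rabs (g - PI) / (sin (dlt g / 2))^2 + / sin (dlt g / 2) + 1.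

Lemma dlt_props g : 0 < g < 2 * PI ->
  0 < dlt g <= PI /\ forall c, Rmin g PI <= c <= Rmax g PI -> dlt g <= c <= 2 * PI - dlt g.
Proof.
  intros Hg. assert (HP := PI_RGT_0). unfold dlt, Rmin, Rmax.
  destruct (Rle_dec g (2 * PI - g)); split; try lra;
  intros c Hc; destruct (Rle_dec g PI); lra.
Qed.

Lemma RLgen (F Psi Psid : R -> R) (B g0 : R) :
  0 < g0 < 2 * PI ->
  (forall g, 0 < g < 2 * PI -> derivable_pt_lim F g (Psid g * w2 g)) ->
  (forall g, derivable_pt_lim Psi g (Psid g)) ->
  (forall g, Rabs (Psi g) <= B) ->
  Rabs (F g0 - F PI) <= B * Kc g0.
Proof.
  intros Hg HF HP HB. assert (HPI := PI_RGT_0).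
  destruct (dlt_props g0 Hg) as [Hd Hc].
  set (d := dlt g0) in *.
  assert (Hs := sin_half_lb d d Hd ltac:(lra)). destruct Hs as [Hs0 _].
  assert (B0 : 0 <= B) by (specialize (HB 0); pose proof (Rabs_pos (Psi 0)); lra).
  set (G := fun g => F g - Psi g * w2 g).
  set (G' := fun g => - (Psi g * (- cos (g/2) / (2 * sin (g/2))^2))).
  assert (HG : Rabs (G g0 - G PI) <= (B / (sin (d/2))^2) * Rabs (g0 - PI)).
  { apply (mvt_bound G G'). intros c Hcc.
    assert (Hcc' := Hc c Hcc).
    assert (Hsc := sin_half_lb d c Hd Hcc'). 
    assert (Hc0 : 0 < c < 2 * PI) by lra.
    split.
    - unfold G, G'.
      replace (- (Psi c * (- cos (c / 2) / (2 * sin (c / 2)) ^ 2))) with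
        (Psid c * w2 c - (Psid c * w2 c + Psi c * (- cos (c / 2) / (2 * sin (c / 2)) ^ 2))) by ring.
      apply D_minus; [apply HF; exact Hc0|].
      apply D_mult; [apply HP|apply D_w2; lra].
    - unfold G'. rewrite Rabs_Ropp, Rabs_mult.
      assert (E : Rabs (- cos (c / 2) / (2 * sin (c / 2)) ^ 2) <= / (sin (d/2))^2).
      { assert (Hsq : (sin (d/2))^2 <= (2 * sin (c/2))^2) by nra.
        set (X := (2 * sin (c/2))^2) in *.
        assert (HX : 0 < X) by (unfold X; nra).
        assert (Hco : Rabs (cos (c/2)) <= 1) by apply Rabs_le, COS_bound.
        set (Y := cos (c/2)) in *.
        unfold Rdiv. rewrite Rabs_mult, Rabs_Ropp, (Rabs_right (/ X)) by (left; apply Rinv_0_lt_compat; exact HX).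
        apply Rle_trans with (1 * / X).
        - apply Rmult_le_compat_r; [left; apply Rinv_0_lt_compat; exact HX|exact Hco].
        - rewrite Rmult_1_l. apply Rinv_le_contravar; [nra|exact Hsq]. }
      unfold Rdiv. apply Rmult_le_compat; [apply Rabs_pos|apply Rabs_pos|apply HB|exact E]. }
  assert (HwG : Rabs (w2 g0) <= / (2 * sin (d/2))).
  { assert (Hsg := sin_half_lb d g0 Hd (Hc g0 ltac:(unfold Rmin, Rmax; destruct (Rle_dec g0 PI); lra))).
    unfold w2. rewrite Rabs_inv, Rabs_right by lra.
    apply Rinv_le_contravar; lra. }
  assert (HwP : w2 PI = / 2).
  { unfold w2. replace (PI/2) with (PI/2) by reflexivity. rewrite sin_PI2. f_equal; ring. }
  assert (E : F g0 - F PI = (G g0 - G PI) + Psi g0 * w2 g0 - Psi PI * w2 PI) by (unfold G; ring).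
  rewrite E. unfold Kc. fold d.
  assert (H1 : Rabs (Psi g0 * w2 g0) <= B * / (2 * sin (d/2))).
  { rewrite Rabs_mult. apply Rmult_le_compat; [apply Rabs_pos|apply Rabs_pos|apply HB|exact HwG]. }
  assert (H2 : Rabs (Psi PI * w2 PI) <= B * / 2).
  { rewrite Rabs_mult, HwP, (Rabs_right (/2)) by lra. apply Rmult_le_compat_r; [lra|apply HB]. }
  assert (H3 : B * / (2 * sin (d/2)) <= B * / sin (d/2)).
  { apply Rmult_le_compat_l; [exact B0|]. apply Rinv_le_contravar; lra. }
  pose proof (Rabs_triang (G g0 - G PI + Psi g0 * w2 g0) (- (Psi PI * w2 PI))) as T1.
  pose proof (Rabs_triang (G g0 - G PI) (Psi g0 * w2 g0)) as T2.
  rewrite Rabs_Ropp in T1.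
  replace (G g0 - G PI + Psi g0 * w2 g0 - Psi PI * w2 PI) with
    (G g0 - G PI + Psi g0 * w2 g0 + - (Psi PI * w2 PI)) by ring.
  assert (HG' : B / sin (d / 2) ^ 2 * Rabs (g0 - PI) = B * (Rabs (g0 - PI) / sin (d / 2) ^ 2)) by (unfold Rdiv; ring).
  rewrite HG' in HG.
  replace (B * (Rabs (g0 - PI) / sin (d / 2) ^ 2 + / sin (d / 2) + 1)) with
    (B * (Rabs (g0 - PI) / sin (d / 2) ^ 2) + B * / sin (d/2) + B) by ring.
  lra.
Qed.

Definition sn (g s : R) : R := if Req_EM_T s 0 then g else sin (g * s) / s.
Definition cn (g s : R) : R := if Req_EM_T s 0 then 0 else cos (g * s) / s.

Lemma D_sn s g : derivable_pt_lim (fun x => sn x s) g (cos (g * s)).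
Proof.
  unfold sn. destruct (Req_EM_T s 0) as [->|Hs].
  - rewrite Rmult_0_r, cos_0. apply derivable_pt_lim_ext with (f := id); [intro; reflexivity|].
    apply derivable_pt_lim_id.
  - replace (cos (g * s)) with (cos (g * s) * s * / s) by (field; exact Hs).
    apply derivable_pt_lim_ext with (f := fun x => sin (x * s) * / s); [intro; reflexivity|].
    apply D_scal, D_sin_lin.
Qed.

Lemma D_cn s g : derivable_pt_lim (fun x => cn x s) g (- sin (g * s)).
Proof.
  unfold cn. destruct (Req_EM_T s 0) as [->|Hs].
  - rewrite Rmult_0_r, sin_0, Ropp_0. apply derivable_pt_lim_ext with (f := fct_cte 0); [intro; reflexivity|].
    apply derivable_pt_lim_const.
  - replace (- sin (g * s)) with (- sin (g * s) * s * / s) by (field; exact Hs).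
    apply derivable_pt_lim_ext with (f := fun x => cos (x * s) * / s); [intro; reflexivity|].
    apply D_scal, D_cos_lin.
Qed.

Lemma cos_tele g u m L :
  2 * sin (g/2) * wsum (fun k => cos (g * (u - IZR k))) m L =
  sin (g * (u - IZR m + /2)) - sin (g * (u - IZR m - INR L + /2)).
Proof.
  revert m; induction L as [|L IH]; intros m.
  - simpl. replace (u - IZR m - 0 + /2) with (u - IZR m + /2) by ring. ring.
  - rewrite wsum_cons, Rmult_plus_distr_l, IH.
    rewrite plus_IZR, S_INR.
    replace (g * (u - IZR m + /2)) with (g * (u - IZR m) + g/2) by field.
    replace (g * (u - (IZR m + 1) + /2)) with (g * (u - IZR m) - g/2) by field.
    replace (g * (u - (IZR m + 1) - INR L + /2)) with (g * (u - IZR m - (INR L + 1) + /2)) by ring.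
    rewrite sin_plus, sin_minus. ring.
Qed.

Lemma sin_tele g u m L :
  2 * sin (g/2) * wsum (fun k => sin (g * (u - IZR k))) m L =
  cos (g * (u - IZR m - INR L + /2)) - cos (g * (u - IZR m + /2)).
Proof.
  revert m; induction L as [|L IH]; intros m.
  - simpl. replace (u - IZR m - 0 + /2) with (u - IZR m + /2) by ring. ring.
  - rewrite wsum_cons, Rmult_plus_distr_l, IH.
    rewrite plus_IZR, S_INR.
    replace (g * (u - IZR m + /2)) with (g * (u - IZR m) + g/2) by field.
    replace (g * (u - (IZR m + 1) + /2)) with (g * (u - IZR m) - g/2) by field.
    replace (g * (u - (IZR m + 1) - INR L + /2)) with (g * (u - IZR m - (INR L + 1) + /2)) by ring.
    rewrite cos_plus, cos_minus. ring.
Qed.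

Lemma sin_half_nz g : 0 < g < 2 * PI -> sin (g/2) <> 0.
Proof. intros H. assert (HP := PI_RGT_0). assert (0 < sin (g/2)) by (apply sin_gt_0; lra). lra. Qed.

Lemma Rabs_sin_div_le x a : a <> 0 -> Rabs (sin x * / a) <= / Rabs a.
Proof.
  intro Ha. rewrite Rabs_mult, Rabs_inv.
  assert (Hs : Rabs (sin x) <= 1) by apply Rabs_le, SIN_bound.
  assert (0 < / Rabs a) by (apply Rinv_0_lt_compat, Rabs_pos_lt, Ha).
  nra.
Qed.

Lemma Rabs_cos_div_le x a : a <> 0 -> Rabs (cos x * / a) <= / Rabs a.
Proof.
  intro Ha. rewrite Rabs_mult, Rabs_inv.
  assert (Hs : Rabs (cos x) <= 1) by apply Rabs_le, COS_bound.
  assert (0 < / Rabs a) by (apply Rinv_0_lt_compat, Rabs_pos_lt, Ha).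
  nra.
Qed.

Lemma L1s u m L g0 :
  let a := u - IZR m + /2 in let b := u - IZR m - INR L + /2 in
  a <> 0 -> b <> 0 -> 0 < g0 < 2 * PI ->
  Rabs (wsum (fun k => sn g0 (u - IZR k)) m L - wsum (fun k => sn PI (u - IZR k)) m L)
  <= (/ Rabs a + / Rabs b) * Kc g0.
Proof.
  intros a b Ha Hb Hg.
  apply (RLgen (fun g => wsum (fun k => sn g (u - IZR k)) m L)
               (fun g => - (cos (g * a) * / a) + cos (g * b) * / b)
               (fun g => sin (g * a) - sin (g * b))); [exact Hg| | |].
  - intros g Hg'. 
    replace ((sin (g * a) - sin (g * b)) * w2 g) with (wsum (fun k => cos (g * (u - IZR k))) m L).
    + apply D_wsum with (F := fun x k => sn x (u - IZR k)). intro k; apply D_sn.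
    + unfold w2. assert (Hs := sin_half_nz g Hg').
      unfold a, b. rewrite <- (cos_tele g u m L). field. exact Hs.
  - intro g. replace (sin (g * a) - sin (g * b)) with
      (- (- sin (g * a) * a * / a) + (- sin (g * b) * b * / b)) by (field; auto).
    apply D_plus.
    + apply derivable_pt_lim_ext with (f := fun x => cos (x * a) * / a * (-1)); [intro; ring|].
      replace (- (- sin (g * a) * a * / a)) with (- sin (g * a) * a * / a * (-1)) by ring.
      apply D_scal, D_scal, D_cos_lin.
    + apply D_scal, D_cos_lin.
  - intro g. eapply Rle_trans; [apply Rabs_triang|]. rewrite Rabs_Ropp.
    apply Rplus_le_compat; apply Rabs_cos_div_le; auto.
Qed.

Lemma L1c u m L g0 :
  let a := u - IZR m + /2 in let b := u - IZR m - INR L + /2 in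
  a <> 0 -> b <> 0 -> 0 < g0 < 2 * PI ->
  Rabs (wsum (fun k => cn g0 (u - IZR k)) m L - wsum (fun k => cn PI (u - IZR k)) m L)
  <= (/ Rabs a + / Rabs b) * Kc g0.
Proof.
  intros a b Ha Hb Hg.
  apply (RLgen (fun g => wsum (fun k => cn g (u - IZR k)) m L)
               (fun g => sin (g * a) * / a - sin (g * b) * / b)
               (fun g => cos (g * a) - cos (g * b))); [exact Hg| | |].
  - intros g Hg'.
    replace ((cos (g * a) - cos (g * b)) * w2 g) with (wsum (fun k => - sin (g * (u - IZR k))) m L).
    + apply D_wsum with (F := fun x k => cn x (u - IZR k)). intro k; apply D_cn.
    + unfold w2. assert (Hs := sin_half_nz g Hg').
      replace (wsum (fun k => - sin (g * (u - IZR k))) m L) with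
        (- wsum (fun k => sin (g * (u - IZR k))) m L).
      2:{ transitivity (-1 * wsum (fun k => sin (g * (u - IZR k))) m L); [ring|].
          rewrite <- wsum_scal. apply wsum_ext. intros; ring. }
      replace (- wsum (fun k : Z => sin (g * (u - IZR k))) m L) with
        (- (2 * sin (g/2) * wsum (fun k : Z => sin (g * (u - IZR k))) m L) / (2 * sin (g/2)))
        by (field; exact Hs).
      rewrite sin_tele. unfold a, b. field. exact Hs.
  - intro g. replace (cos (g * a) - cos (g * b)) with
      (cos (g * a) * a * / a - cos (g * b) * b * / b) by (field; auto).
    apply D_minus; apply D_scal, D_sin_lin.
  - intro g. eapply Rle_trans; [apply Rabs_triang|]. rewrite Rabs_Ropp.
    apply Rplus_le_compat; apply Rabs_sin_div_le; auto.
Qed.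

Lemma Kc_pos g : 0 < g < 2 * PI -> 0 < Kc g.
Proof.
  intro Hg. destruct (dlt_props g Hg) as [Hd _].
  assert (Hs := sin_half_lb (dlt g) (dlt g) Hd ltac:(lra)).
  unfold Kc. assert (0 <= Rabs (g - PI) / sin (dlt g / 2) ^ 2).
  { unfold Rdiv. apply Rmult_le_pos; [apply Rabs_pos|left; apply Rinv_0_lt_compat; nra]. }
  assert (0 < / sin (dlt g / 2)) by (apply Rinv_0_lt_compat; lra). lra.
Qed.

Lemma big_Z (x : R) : exists M : Z, (0 <= M)%Z /\ x < IZR M.
Proof.
  destruct (archimed (Rabs x)) as [H1 _]. exists (Z.abs (up (Rabs x))). split; [lia|].
  rewrite abs_IZR. pose proof (Rle_abs x). pose proof (Rle_abs (IZR (up (Rabs x)))). lra.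
Qed.

Lemma win_small u C eps : 0 <= C -> 0 < eps ->
  exists M : Z, (0 <= M)%Z /\ forall m1 m2 : Z, (m1 <= -M)%Z -> (M <= m2)%Z ->
    u - IZR m1 + /2 <> 0 /\ u - IZR m2 - /2 <> 0 /\
    (/ Rabs (u - IZR m1 + /2) + / Rabs (u - IZR m2 - /2)) * C < eps.
Proof.
  intros HC He.
  destruct (big_Z (Rabs u + 2 * (C + 1) / eps + 1)) as [M [HM0 HM]].
  exists M. split; [exact HM0|]. intros m1 m2 H1 H2.
  apply IZR_le in H1. apply IZR_le in H2. rewrite opp_IZR in H1.
  assert (Hq : 0 < 2 * (C + 1) / eps) by (apply Rdiv_lt_0_compat; lra).
  pose proof (Rle_abs u). pose proof (Rle_abs (-u)). rewrite Rabs_Ropp in H0.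
  set (D := IZR M - Rabs u).
  assert (HD : 2 * (C + 1) / eps < D) by (unfold D; lra).
  assert (HD0 : 0 < D) by lra.
  assert (Ha : D <= Rabs (u - IZR m1 + /2)).
  { rewrite Rabs_right by lra. unfold D. lra. }
  assert (Hb : D <= Rabs (u - IZR m2 - /2)).
  { rewrite Rabs_left by lra. unfold D. lra. }
  split; [intro E; rewrite E, Rabs_R0 in Ha; lra|].
  split; [intro E; rewrite E, Rabs_R0 in Hb; lra|].
  assert (Ia : / Rabs (u - IZR m1 + /2) <= / D) by (apply Rinv_le_contravar; lra).
  assert (Ib : / Rabs (u - IZR m2 - /2) <= / D) by (apply Rinv_le_contravar; lra).
  apply Rle_lt_trans with (2 / D * C).
  - apply Rmult_le_compat_r; [exact HC|]. unfold Rdiv. lra.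
  - assert (2 * C < eps * D).
    { apply Rmult_lt_compat_l with (r := eps) in HD; [|exact He].
      unfold Rdiv in HD. rewrite <- Rmult_assoc, (Rmult_comm eps), Rmult_assoc, Rinv_r, Rmult_1_r in HD by lra.
      lra. }
    apply Rmult_lt_reg_r with D; [exact HD0|]. unfold Rdiv.
    replace (2 * / D * C * D) with (2 * C) by (field; lra). lra.
Qed.


Lemma INR_len m1 m2 : (m1 <= m2 + 1)%Z -> INR (Z.to_nat (m2 - m1 + 1)) = IZR (m2 - m1 + 1).
Proof. intro H. rewrite INR_IZR_INZ, Z2Nat.id by lia. reflexivity. Qed.

Lemma L1s_z u g0 eps : 0 < g0 < 2 * PI -> 0 < eps ->
  exists M : Z, (0 <= M)%Z /\ forall m1 m2 : Z, (m1 <= -M)%Z -> (M <= m2)%Z ->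
  Rabs (zsum (fun k => sn g0 (u - IZR k)) m1 m2 - zsum (fun k => sn PI (u - IZR k)) m1 m2) < eps.
Proof.
  intros Hg He. destruct (win_small u (Kc g0) eps (Rlt_le _ _ (Kc_pos g0 Hg)) He) as [M [HM H]].
  exists M. split; [exact HM|]. intros m1 m2 H1 H2.
  destruct (H m1 m2 H1 H2) as [Ha [Hb Hlt]].
  pose proof (L1s u m1 (Z.to_nat (m2 - m1 + 1)) g0) as T. cbv zeta in T.
  rewrite INR_len in T by lia. rewrite plus_IZR, minus_IZR in T.
  replace (u - IZR m1 - (IZR m2 - IZR m1 + 1) + / 2) with (u - IZR m2 - /2) in T by field.
  unfold zsum. eapply Rle_lt_trans; [apply T; auto|exact Hlt].
Qed.

Lemma L1c_z u g0 eps : 0 < g0 < 2 * PI -> 0 < eps ->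
  exists M : Z, (0 <= M)%Z /\ forall m1 m2 : Z, (m1 <= -M)%Z -> (M <= m2)%Z ->
  Rabs (zsum (fun k => cn g0 (u - IZR k)) m1 m2 - zsum (fun k => cn PI (u - IZR k)) m1 m2) < eps.
Proof.
  intros Hg He. destruct (win_small u (Kc g0) eps (Rlt_le _ _ (Kc_pos g0 Hg)) He) as [M [HM H]].
  exists M. split; [exact HM|]. intros m1 m2 H1 H2.
  destruct (H m1 m2 H1 H2) as [Ha [Hb Hlt]].
  pose proof (L1c u m1 (Z.to_nat (m2 - m1 + 1)) g0) as T. cbv zeta in T.
  rewrite INR_len in T by lia. rewrite plus_IZR, minus_IZR in T.
  replace (u - IZR m1 - (IZR m2 - IZR m1 + 1) + / 2) with (u - IZR m2 - /2) in T by field.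
  unfold zsum. eapply Rle_lt_trans; [apply T; auto|exact Hlt].
Qed.

Lemma sinc_nz s : s <> 0 -> sinc s = sin (PI * s) / (PI * s).
Proof. intro H. unfold sinc. destruct (Req_EM_T s 0); [contradiction|reflexivity]. Qed.

Lemma sinc_0 : sinc 0 = 1.
Proof. unfold sinc. destruct (Req_EM_T 0 0); [reflexivity|contradiction]. Qed.

Lemma sinc_even s : sinc (- s) = sinc s.
Proof.
  destruct (Req_EM_T s 0) as [->|H].
  - rewrite Ropp_0; reflexivity.
  - rewrite !sinc_nz by lra. replace (PI * - s) with (- (PI * s)) by ring.
    rewrite sin_neg. field. split; [exact H|]. apply PI_neq0.
Qed.

Lemma sn_PI s : sn PI s = PI * sinc s.
Proof.
  unfold sn. destruct (Req_EM_T s 0) as [->|H].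
  - rewrite sinc_0; ring.
  - rewrite sinc_nz by exact H. field. split; [exact H|apply PI_neq0].
Qed.

Lemma cont_eps f x : continuity_pt f x <->
  (forall eps, 0 < eps -> exists d, 0 < d /\ forall y, Rabs (y - x) < d -> Rabs (f y - f x) < eps).
Proof.
  split.
  - intros H eps He. destruct (H eps He) as [d [Hd Hy]]. exists d. split; [exact Hd|].
    intros y Hyd. destruct (Req_EM_T y x) as [->|Hne].
    + rewrite Rminus_diag, Rabs_R0. exact He.
    + apply (Hy y). split; [split; [exact I|auto]|exact Hyd].
  - intros H eps He. destruct (H eps He) as [d [Hd Hy]]. exists d. split; [exact Hd|].
    intros y [_ Hyd]. apply Hy. exact Hyd.
Qed.

Lemma sinc_cont s0 : continuity_pt sinc s0.
Proof.
  assert (HP := PI_RGT_0).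
  destruct (Req_EM_T s0 0) as [->|Hs].
  - apply cont_eps. intros eps He.
    destruct (derivable_pt_lim_sin 0 eps He) as [del Hdel].
    exists (del / PI). split; [apply Rdiv_lt_0_compat; [apply cond_pos|exact HP]|].
    intros y Hy. rewrite sinc_0. destruct (Req_EM_T y 0) as [->|Hy0].
    + rewrite sinc_0, Rminus_diag, Rabs_R0; exact He.
    + rewrite sinc_nz by exact Hy0.
      assert (Hh : PI * y <> 0) by (apply Rmult_integral_contrapositive; split; [apply PI_neq0|exact Hy0]).
      specialize (Hdel (PI * y) Hh).
      rewrite Rplus_0_l, sin_0, cos_0, Rminus_0_r in Hdel. apply Hdel.
      rewrite Rminus_0_r in Hy. rewrite Rabs_mult, (Rabs_right PI) by lra.
      apply Rmult_lt_reg_r with (/ PI); [apply Rinv_0_lt_compat; exact HP|].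
      replace (PI * Rabs y * / PI) with (Rabs y) by (field; lra). exact Hy.
  - apply continuity_pt_locally_ext with (f := fun s => sin (PI * s) / (PI * s)) (a := Rabs s0).
    + apply Rabs_pos_lt, Hs.
    + intros y Hy. symmetry. apply sinc_nz. intro E. subst y. unfold Rdist in Hy.
      rewrite Rminus_0_l, Rabs_Ropp in Hy. lra.
    + set (g := fun s => PI * s).
      apply continuity_pt_locally_ext with (f := (comp sin g / g)%F) (a := 1); [lra| |].
      * intros y _. reflexivity.
      * apply continuity_pt_div.
        -- apply continuity_pt_comp; [|apply continuity_sin].
           apply derivable_continuous_pt. exists PI. unfold g.
           apply derivable_pt_lim_ext with (f := fun s => s * PI); [intro; ring|apply D_lin].
        -- apply derivable_continuous_pt. exists PI. unfold g.
           apply derivable_pt_lim_ext with (f := fun s => s * PI); [intro; ring|apply D_lin].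
        -- unfold g. apply Rmult_integral_contrapositive; split; [apply PI_neq0|exact Hs].
Qed.

Lemma hsum_cont m L c : continuity_pt (fun u => wsum (fun k => sinc (u - IZR k)) m L) c.
Proof.
  revert m; induction L as [|L IH]; intros m.
  - simpl. apply continuity_pt_const. intros x y; reflexivity.
  - apply continuity_pt_locally_ext with
      (f := ((fun u => sinc (u - IZR m)) + (fun u => wsum (fun k => sinc (u - IZR k)) (m+1)%Z L))%F)
      (a := 1); [lra|intros; reflexivity|].
    apply continuity_pt_plus; [|apply IH].
    apply continuity_pt_locally_ext with (f := comp sinc (fun u => u - IZR m)) (a := 1);
      [lra|intros; reflexivity|].
    apply continuity_pt_comp; [|apply sinc_cont].
    apply derivable_continuous_pt. exists 1.
    apply derivable_pt_lim_ext with (f := (id - fct_cte (IZR m))%F); [intro; reflexivity|].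
    replace 1 with (1 - 0) by ring. apply derivable_pt_lim_minus;
      [apply derivable_pt_lim_id|apply derivable_pt_lim_const].
Qed.

Fixpoint alt (L : nat) (e : nat -> R) : R :=
  match L with O => 0 | S L' => e O - alt L' (fun j => e (S j)) end.

Lemma alt_S L e : alt (S L) e = e O - alt L (fun j => e (S j)).
Proof. reflexivity. Qed.

Lemma alt_ext L e e' : (forall j, e j = e' j) -> alt L e = alt L e'.
Proof.
  revert e e'; induction L as [|L IH]; intros e e' H; simpl; [reflexivity|].
  rewrite H, (IH _ (fun j => e' (S j))); [reflexivity|intro; apply H].
Qed.

Lemma alt_bound L e : (forall j, 0 <= e (S j) <= e j) -> 0 <= alt L e <= e O.
Proof.
  revert e; induction L as [|L IH]; intros e H; simpl.
  - specialize (H O). lra.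
  - assert (H1 := IH (fun j => e (S j)) (fun j => H (S j))). specialize (H O). simpl in H1. lra.
Qed.

Lemma sin_shift_PI x : sin (x - PI) = - sin x.
Proof. rewrite sin_minus, sin_PI, cos_PI. ring. Qed.

Lemma tail_alt u m L : u < IZR m ->
  wsum (fun k => sinc (u - IZR k)) m L =
  - (sin (PI * (u - IZR m)) / PI) * alt L (fun j => / (IZR m + INR j - u)).
Proof.
  assert (HP := PI_RGT_0).
  revert m; induction L as [|L IH]; intros m Hm.
  - simpl. ring.
  - rewrite wsum_cons, IH by (rewrite plus_IZR; lra). rewrite alt_S. cbv beta.
    rewrite sinc_nz by lra.
    rewrite (alt_ext L (fun j => / (IZR m + INR (S j) - u)) (fun j => / (IZR (m + 1) + INR j - u)))
      by (intro j; rewrite plus_IZR, S_INR; f_equal; ring).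
    rewrite plus_IZR.
    replace (PI * (u - (IZR m + 1))) with (PI * (u - IZR m) - PI) by ring.
    rewrite sin_shift_PI. replace (IZR m + INR 0 - u) with (IZR m - u) by (simpl; ring).
    field. split; lra.
Qed.

Lemma tail_right u m L : u < IZR m ->
  Rabs (wsum (fun k => sinc (u - IZR k)) m L) <= / (PI * (IZR m - u)).
Proof.
  intros Hm. assert (HP := PI_RGT_0). rewrite tail_alt by exact Hm.
  assert (Hb := alt_bound L (fun j => / (IZR m + INR j - u))).
  destruct Hb as [Hb1 Hb2].
  { intro j. rewrite S_INR. pose proof (pos_INR j). split.
    - left; apply Rinv_0_lt_compat; lra.
    - apply Rinv_le_contravar; lra. }
  simpl in Hb2. replace (IZR m + 0 - u) with (IZR m - u) in Hb2 by ring.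
  rewrite Rabs_mult, Rabs_Ropp, (Rabs_right (alt _ _)) by lra.
  unfold Rdiv. rewrite Rabs_mult, (Rabs_right (/ PI)) by (left; apply Rinv_0_lt_compat; lra).
  assert (Hs : Rabs (sin (PI * (u - IZR m))) <= 1) by apply Rabs_le, SIN_bound.
  rewrite Rinv_mult.
  assert (0 < / PI) by (apply Rinv_0_lt_compat; lra).
  apply Rle_trans with (1 * / PI * / (IZR m - u)).
  - apply Rmult_le_compat; [apply Rmult_le_pos; [apply Rabs_pos|lra]|lra|apply Rmult_le_compat_r; lra|exact Hb2].
  - lra.
Qed.

Lemma tail_left u m L : IZR m + INR L - 1 < u ->
  Rabs (wsum (fun k => sinc (u - IZR k)) m L) <= / (PI * (u - (IZR m + INR L - 1))).
Proof.
  intros Hm. rewrite wsum_rev.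
  rewrite (wsum_ext _ (fun k => sinc (- u - IZR k))) by
    (intros k _; rewrite opp_IZR, <- sinc_even; f_equal; ring).
  eapply Rle_trans; [apply tail_right|].
  - rewrite plus_IZR, opp_IZR, plus_IZR, <- INR_IZR_INZ. lra.
  - rewrite plus_IZR, opp_IZR, plus_IZR, <- INR_IZR_INZ.
    right. f_equal. f_equal. ring.
Qed.

Definition hs (u : R) (m1 m2 : Z) : R := zsum (fun k => sinc (u - IZR k)) m1 m2.

Lemma inv_pi_mono x y : 0 < x <= y -> / (PI * y) <= / (PI * x).
Proof. intros H. assert (HP := PI_RGT_0). apply Rinv_le_contravar; nra. Qed.

Lemma hwin u (M : Z) m1 m2 : Rabs u <= IZR M -> (m1 <= -M)%Z -> (M <= m2)%Z ->
  Rabs (hs u m1 m2 - hs u (-M) M) <= 2 / (PI * (IZR M + 1 - Rabs u)).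
Proof.
  intros Hu H1 H2. assert (HP := PI_RGT_0).
  assert (HM0 : (0 <= M)%Z) by (apply le_IZR; pose proof (Rabs_pos u); lra).
  pose proof (Rle_abs u). pose proof (Rle_abs (-u)). rewrite Rabs_Ropp in H0.
  unfold hs. rewrite (zsum_split _ m1 (-M) m2) by lia.
  rewrite (zsum_split _ (-M) (M+1) m2) by lia. replace (M + 1 - 1)%Z with M by lia.
  replace (zsum (fun k : Z => sinc (u - IZR k)) m1 (- M - 1) +
     (zsum (fun k : Z => sinc (u - IZR k)) (- M) M + zsum (fun k : Z => sinc (u - IZR k)) (M + 1) m2) -
     zsum (fun k : Z => sinc (u - IZR k)) (- M) M) with
    (zsum (fun k : Z => sinc (u - IZR k)) m1 (- M - 1) + zsum (fun k : Z => sinc (u - IZR k)) (M + 1) m2) by ring.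
  eapply Rle_trans; [apply Rabs_triang|].
  assert (Hp : 0 < IZR M + 1 - Rabs u) by lra.
  replace (2 / (PI * (IZR M + 1 - Rabs u))) with
    (/ (PI * (IZR M + 1 - Rabs u)) + / (PI * (IZR M + 1 - Rabs u))) by (field; lra).
  apply Rplus_le_compat.
  - unfold zsum. eapply Rle_trans; [apply tail_left|].
    + rewrite INR_len by lia. rewrite plus_IZR, minus_IZR, minus_IZR, opp_IZR. lra.
    + rewrite INR_len by lia. rewrite plus_IZR, minus_IZR, minus_IZR, opp_IZR.
      apply inv_pi_mono. lra.
  - unfold zsum. eapply Rle_trans; [apply tail_right|].
    + rewrite plus_IZR. lra.
    + rewrite plus_IZR. apply inv_pi_mono. lra.
Qed.

Lemma choose_N u C eps : 0 <= C -> 0 < eps ->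
  exists N : nat, Rabs u + 1 <= INR N /\ C / (PI * (INR N - Rabs u)) < eps.
Proof.
  intros HC He. assert (HP := PI_RGT_0).
  destruct (big_Z (Rabs u + 1 + C / (PI * eps))) as [M [HM0 HM]].
  exists (Z.to_nat M). rewrite INR_IZR_INZ, Z2Nat.id by exact HM0.
  assert (Hq : 0 <= C / (PI * eps)) by (apply Rmult_le_pos; [exact HC|left; apply Rinv_0_lt_compat; nra]).
  split; [lra|].
  assert (HD : C / (PI * eps) < IZR M - Rabs u) by lra.
  assert (HD0 : 0 < IZR M - Rabs u) by lra.
  apply Rmult_lt_reg_r with (PI * (IZR M - Rabs u)); [nra|].
  unfold Rdiv. rewrite Rmult_assoc, Rinv_l, Rmult_1_r by nra.
  unfold Rdiv in HD.
  apply Rmult_lt_compat_l with (r := PI * eps) in HD; [|nra].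
  replace (PI * eps * (C * / (PI * eps))) with C in HD by (field; lra). nra.
Qed.

Definition hn (u : R) (n : nat) : R := hs u (- Z.of_nat n) (Z.of_nat n).

Lemma hn_close u (N n : nat) : Rabs u <= INR N -> (N <= n)%nat ->
  Rabs (hn u n - hn u N) <= 2 / (PI * (INR N + 1 - Rabs u)).
Proof.
  intros Hu Hn. unfold hn. rewrite INR_IZR_INZ in *. apply hwin; [exact Hu|lia|lia].
Qed.

Lemma hn_cauchy u : Cauchy_crit (hn u).
Proof.
  intros eps He. assert (HP := PI_RGT_0).
  destruct (choose_N u 4 eps ltac:(lra) He) as [N [HN1 HN2]].
  exists N. intros n m Hn Hm. unfold R_dist.
  assert (A := hn_close u N n ltac:(lra) Hn).
  assert (B := hn_close u N m ltac:(lra) Hm).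
  assert (Hb : 2 / (PI * (INR N + 1 - Rabs u)) <= 2 / (PI * (INR N - Rabs u))).
  { unfold Rdiv. apply Rmult_le_compat_l; [lra|]. apply inv_pi_mono. lra. }
  replace (hn u n - hn u m) with ((hn u n - hn u N) - (hn u m - hn u N)) by ring.
  eapply Rle_lt_trans; [apply Rabs_triang|]. rewrite Rabs_Ropp.
  replace (4 / (PI * (INR N - Rabs u))) with (2 * (2 / (PI * (INR N - Rabs u)))) in HN2 by (unfold Rdiv; ring).
  lra.
Qed.

Definition hlim (u : R) : R := proj1_sig (R_complete (hn u) (hn_cauchy u)).

Lemma hlim_cv u : Un_cv (hn u) (hlim u).
Proof. unfold hlim. destruct (R_complete (hn u) (hn_cauchy u)) as [l Hl]. exact Hl. Qed.

Lemma cv_bound (U : nat -> R) l x B (N : nat) : Un_cv U l -> (forall n, (N <= n)%nat -> Rabs (U n - x) <= B) ->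
  Rabs (l - x) <= B.
Proof.
  intros Hcv HB. destruct (Rle_dec (Rabs (l - x)) B) as [|Hn]; [assumption|].
  exfalso. apply Rnot_le_lt in Hn.
  destruct (Hcv (Rabs (l - x) - B) ltac:(lra)) as [N0 HN0].
  specialize (HN0 (max N N0) ltac:(lia)). specialize (HB (max N N0) ltac:(lia)).
  unfold R_dist in HN0.
  pose proof (Rabs_triang (U (max N N0) - x) (l - U (max N N0))).
  replace (U (max N N0) - x + (l - U (max N N0))) with (l - x) in H by ring.
  rewrite Rabs_minus_sym in HN0. lra.
Qed.

Lemma hlim_approx u (N : nat) : Rabs u <= INR N ->
  Rabs (hlim u - hn u N) <= 2 / (PI * (INR N + 1 - Rabs u)).
Proof.
  intros Hu. apply (cv_bound (hn u) _ _ _ N (hlim_cv u)). intros n Hn. apply hn_close; auto.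
Qed.

Lemma hwin_lim u (N : nat) m1 m2 : Rabs u <= INR N -> (m1 <= - Z.of_nat N)%Z -> (Z.of_nat N <= m2)%Z ->
  Rabs (hs u m1 m2 - hlim u) <= 4 / (PI * (INR N + 1 - Rabs u)).
Proof.
  intros Hu H1 H2.
  assert (A := hlim_approx u N Hu).
  assert (B : Rabs (hs u m1 m2 - hn u N) <= 2 / (PI * (INR N + 1 - Rabs u))).
  { unfold hn. rewrite INR_IZR_INZ in *. apply hwin; auto. }
  replace (hs u m1 m2 - hlim u) with ((hs u m1 m2 - hn u N) - (hlim u - hn u N)) by ring.
  eapply Rle_trans; [apply Rabs_triang|]. rewrite Rabs_Ropp.
  replace (4 / (PI * (INR N + 1 - Rabs u))) with
    (2 / (PI * (INR N + 1 - Rabs u)) + 2 / (PI * (INR N + 1 - Rabs u))) by (unfold Rdiv; ring).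
  lra.
Qed.

Lemma hwin_eps u eps : 0 < eps -> exists N : nat, forall m1 m2,
  (m1 <= - Z.of_nat N)%Z -> (Z.of_nat N <= m2)%Z -> Rabs (hs u m1 m2 - hlim u) < eps.
Proof.
  intros He. assert (HP := PI_RGT_0).
  destruct (choose_N u 4 eps ltac:(lra) He) as [N [HN1 HN2]].
  exists N. intros m1 m2 H1 H2.
  eapply Rle_lt_trans; [apply hwin_lim; eauto; lra|].
  eapply Rle_lt_trans; [|exact HN2].
  unfold Rdiv. apply Rmult_le_compat_l; [lra|]. apply inv_pi_mono. lra.
Qed.

Lemma eq_eps x y : (forall eps, 0 < eps -> Rabs (x - y) < eps) -> x = y.
Proof.
  intro H. destruct (Req_EM_T x y) as [|Hne]; [assumption|].
  exfalso. assert (0 < Rabs (x - y)) by (apply Rabs_pos_lt; lra).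
  specialize (H _ H0). lra.
Qed.

Lemma hs_shift u z m1 m2 : hs (u + IZR z) m1 m2 = hs u (m1 - z) (m2 - z).
Proof.
  unfold hs, zsum. replace (Z.to_nat (m2 - z - (m1 - z) + 1)) with (Z.to_nat (m2 - m1 + 1)) by (f_equal; lia).
  transitivity (wsum (fun k => sinc (u - IZR k)) (m1 + - z)%Z (Z.to_nat (m2 - m1 + 1))).
  - rewrite <- wsum_shift. apply wsum_ext. intros k _. rewrite plus_IZR, opp_IZR. f_equal. ring.
  - f_equal; try lia.
Qed.

Lemma hlim_period u z : hlim (u + IZR z) = hlim u.
Proof.
  apply eq_eps. intros eps He.
  destruct (hwin_eps (u + IZR z) (eps/2) ltac:(lra)) as [N1 H1].
  destruct (hwin_eps u (eps/2) ltac:(lra)) as [N2 H2].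
  set (K := (Z.of_nat N1 + Z.of_nat N2 + Z.abs z)%Z).
  specialize (H1 (-K)%Z K ltac:(unfold K; lia) ltac:(unfold K; lia)).
  specialize (H2 (-K - z)%Z (K - z)%Z ltac:(unfold K; lia) ltac:(unfold K; lia)).
  rewrite hs_shift in H1.
  replace (hlim (u + IZR z) - hlim u) with
    ((hs u (- K - z) (K - z) - hlim u) - (hs u (- K - z) (K - z) - hlim (u + IZR z))) by ring.
  eapply Rle_lt_trans; [apply Rabs_triang|]. rewrite Rabs_Ropp. lra.
Qed.

Lemma hn_0 n : hn 0 n = 1.
Proof.
  unfold hn, hs, zsum. rewrite (wsum_delta _ _ _ 0%Z).
  - rewrite Rminus_0_r, sinc_0. reflexivity.
  - rewrite Z2Nat.id by lia. lia.
  - intros k Hk. rewrite sinc_nz.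
    + rewrite sin_eq_0_1; [unfold Rdiv; ring|]. exists (- k)%Z. rewrite opp_IZR. ring.
    + intro E. apply Hk. apply eq_IZR. lra.
Qed.

Lemma hlim_0 : hlim 0 = 1.
Proof.
  apply (UL_sequence (hn 0)); [apply hlim_cv|].
  intros eps He. exists O. intros n _. rewrite hn_0. unfold R_dist. rewrite Rminus_diag, Rabs_R0. exact He.
Qed.

Lemma hlim_cont c : continuity_pt hlim c.
Proof.
  apply cont_eps. intros eps He. assert (HP := PI_RGT_0).
  destruct (choose_N (Rabs c + 1) 2 (eps/3) ltac:(lra) ltac:(lra)) as [N [HN1 HN2]].
  rewrite (Rabs_right (Rabs c + 1)) in * by (pose proof (Rabs_pos c); lra).
  assert (Hc := proj1 (cont_eps (fun u => hn u N) c) (hsum_cont _ _ c) (eps/3) ltac:(lra)).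
  destruct Hc as [d [Hd Hdy]].
  exists (Rmin 1 d). split; [apply Rmin_pos; lra|].
  intros y Hy. assert (Hy1 : Rabs (y - c) < 1) by (eapply Rlt_le_trans; [exact Hy|apply Rmin_l]).
  assert (Hyd : Rabs (y - c) < d) by (eapply Rlt_le_trans; [exact Hy|apply Rmin_r]).
  assert (Hyy : Rabs y <= Rabs c + 1).
  { replace y with ((y - c) + c) by ring. eapply Rle_trans; [apply Rabs_triang|lra]. }
  assert (A1 := hlim_approx y N ltac:(lra)).
  assert (A2 := hlim_approx c N ltac:(pose proof (Rabs_pos c); lra)).
  assert (B1 : 2 / (PI * (INR N + 1 - Rabs y)) <= 2 / (PI * (INR N - (Rabs c + 1)))).
  { unfold Rdiv. apply Rmult_le_compat_l; [lra|]. apply inv_pi_mono. lra. }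
  assert (B2 : 2 / (PI * (INR N + 1 - Rabs c)) <= 2 / (PI * (INR N - (Rabs c + 1)))).
  { unfold Rdiv. apply Rmult_le_compat_l; [lra|]. apply inv_pi_mono. pose proof (Rabs_pos c). lra. }
  specialize (Hdy y Hyd). cbv beta in Hdy.
  replace (hlim y - hlim c) with ((hlim y - hn y N) + (hn y N - hn c N) - (hlim c - hn c N)) by ring.
  eapply Rle_lt_trans; [apply Rabs_triang|]. rewrite Rabs_Ropp.
  eapply Rle_lt_trans; [apply Rplus_le_compat_r; apply Rabs_triang|]. lra.
Qed.

Lemma sn_half s : 2 / PI * sn (PI / 2) s = sinc (s / 2).
Proof.
  assert (HP := PI_RGT_0). unfold sn. destruct (Req_EM_T s 0) as [->|H].
  - unfold Rdiv at 3. rewrite Rmult_0_l, sinc_0. field. lra.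
  - rewrite sinc_nz by lra. replace (PI / 2 * s) with (PI * (s / 2)) by field. field. lra.
Qed.

Lemma double_finite u n :
  hn (u/2) n + hn ((u+1)/2) n =
  2 / PI * zsum (fun j => sn (PI/2) (u - IZR j)) (-2 * Z.of_nat n - 1) (2 * Z.of_nat n).
Proof.
  unfold hn, hs, zsum.
  replace (Z.to_nat (Z.of_nat n - - Z.of_nat n + 1)) with (2 * n + 1)%nat by lia.
  replace (Z.to_nat (2 * Z.of_nat n - (-2 * Z.of_nat n - 1) + 1)) with (2 * (2 * n + 1))%nat by lia.
  replace (-2 * Z.of_nat n - 1)%Z with (2 * (- Z.of_nat n) - 1)%Z by lia.
  rewrite <- wsum_plus, <- wsum_scal, wsum_pair.
  apply wsum_ext. intros k _.
  rewrite !sn_half. rewrite minus_IZR, !mult_IZR.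
  rewrite Rplus_comm. f_equal; f_equal; field.
Qed.

Lemma hlim_double u : hlim (u/2) + hlim ((u+1)/2) = 2 * hlim u.
Proof.
  assert (HP := PI_RGT_0).
  apply Rminus_diag_uniq. rewrite <- Rminus_0_r at 1. apply eq_eps. intros eps He.
  rewrite Rminus_0_r.
  destruct (hlim_cv (u/2) (eps/4) ltac:(lra)) as [Na Ha].
  destruct (hlim_cv ((u+1)/2) (eps/4) ltac:(lra)) as [Nb Hb].
  destruct (L1s_z u (PI/2) (eps * PI / 8) ltac:(lra) ltac:(nra)) as [Mc [HMc Hc]].
  destruct (hwin_eps u (eps/8) ltac:(lra)) as [Nd Hd].
  set (n := (Na + Nb + Z.to_nat Mc + Nd)%nat).
  specialize (Ha n ltac:(unfold n; lia)). specialize (Hb n ltac:(unfold n; lia)).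
  unfold R_dist in Ha, Hb.
  specialize (Hc (-2 * Z.of_nat n - 1)%Z (2 * Z.of_nat n)%Z ltac:(unfold n; lia) ltac:(unfold n; lia)).
  specialize (Hd (-2 * Z.of_nat n - 1)%Z (2 * Z.of_nat n)%Z ltac:(unfold n; lia) ltac:(unfold n; lia)).
  assert (E := double_finite u n).
  set (W1 := (-2 * Z.of_nat n - 1)%Z) in *. set (W2 := (2 * Z.of_nat n)%Z) in *.
  set (D := zsum (fun k => sn (PI / 2) (u - IZR k)) W1 W2 - zsum (fun k => sn PI (u - IZR k)) W1 W2) in *.
  assert (E2 : zsum (fun j => sn (PI/2) (u - IZR j)) W1 W2 = D + PI * hs u W1 W2).
  { unfold D, hs, zsum. rewrite <- wsum_scal. 
    rewrite (wsum_ext (fun k => PI * sinc (u - IZR k)) (fun k => sn PI (u - IZR k))) by (intros; rewrite sn_PI; ring).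
    ring. }
  rewrite E2 in E.
  replace (hlim (u / 2) + hlim ((u + 1) / 2) - 2 * hlim u) with
    (- (hn (u / 2) n - hlim (u / 2)) - (hn ((u + 1) / 2) n - hlim ((u + 1) / 2))
     + 2 / PI * D + 2 * (hs u W1 W2 - hlim u)).
  2:{ assert (E3 : hn (u/2) n + hn ((u+1)/2) n = 2 / PI * D + 2 * hs u W1 W2) by (rewrite E; field; lra).
       lra. }
  assert (HD : Rabs (2 / PI * D) < eps / 4).
  { rewrite Rabs_mult, (Rabs_right (2/PI)) by (left; apply Rdiv_lt_0_compat; lra).
    apply Rmult_lt_reg_l with (PI / 2); [lra|].
    replace (PI / 2 * (2 / PI * Rabs D)) with (Rabs D) by (field; lra). nra. }
  assert (H2 : Rabs (2 * (hs u W1 W2 - hlim u)) < eps / 4).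
  { rewrite Rabs_mult, Rabs_right by lra. lra. }
  pose proof (Rabs_triang (- (hn (u / 2) n - hlim (u / 2)) - (hn ((u + 1) / 2) n - hlim ((u + 1) / 2)) + 2 / PI * D)
                          (2 * (hs u W1 W2 - hlim u))).
  pose proof (Rabs_triang (- (hn (u / 2) n - hlim (u / 2)) - (hn ((u + 1) / 2) n - hlim ((u + 1) / 2))) (2 / PI * D)).
  pose proof (Rabs_triang (- (hn (u / 2) n - hlim (u / 2))) (- (hn ((u + 1) / 2) n - hlim ((u + 1) / 2)))).
  rewrite !Rabs_Ropp in H1.
  replace (- (hn (u / 2) n - hlim (u / 2)) - (hn ((u + 1) / 2) n - hlim ((u + 1) / 2))) with
    (- (hn (u / 2) n - hlim (u / 2)) + - (hn ((u + 1) / 2) n - hlim ((u + 1) / 2))) in * by ring.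
  rewrite ?Rminus_0_r. lra.
Qed.

Lemma half_pow_bounds n : 0 <= (/2)^n <= 1.
Proof.
  induction n as [|n IH]; simpl; [lra|]. split; [apply Rmult_le_pos; lra|]. lra.
Qed.

Lemma herg_chain (Mx : R) (sgn : R) : 0 <= Mx <= 1 -> (sgn = 1 \/ sgn = -1) ->
  (forall c, 0 <= c <= 1 -> sgn * hlim c <= sgn * hlim Mx) ->
  forall n, hlim (Mx * (/2)^n) = hlim Mx.
Proof.
  intros HM Hs Hmax n. induction n as [|n IH].
  - simpl. rewrite Rmult_1_r. reflexivity.
  - set (x := Mx * (/2)^n) in *.
    assert (Hx : 0 <= x <= 1) by (unfold x; pose proof (half_pow_bounds n); nra).
    assert (D := hlim_double x). rewrite IH in D.
    assert (A := Hmax (x/2) ltac:(lra)). assert (B := Hmax ((x+1)/2) ltac:(lra)).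
    replace (Mx * (/2)^(S n)) with (x / 2) by (unfold x; simpl; field).
    destruct Hs as [->| ->]; lra.
Qed.

Lemma herg_end (Mx : R) : 0 <= Mx <= 1 -> (forall n, hlim (Mx * (/2)^n) = hlim Mx) -> hlim Mx = 1.
Proof.
  intros HM Hc. rewrite <- hlim_0. apply eq_eps. intros eps He.
  destruct (proj1 (cont_eps hlim 0) (hlim_cont 0) eps He) as [d [Hd Hy]].
  destruct (pow_lt_1_zero (/2) ltac:(rewrite Rabs_right; lra) d Hd) as [N HN].
  specialize (HN N (Nat.le_refl N)).
  rewrite <- (Hc N). apply Hy. rewrite Rminus_0_r, Rabs_mult.
  rewrite (Rabs_right Mx) by lra. pose proof (Rabs_pos ((/2)^N)). nra.
Qed.

Lemma hlim_one u : hlim u = 1.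
Proof.
  assert (H01 : forall v, 0 <= v <= 1 -> hlim v = 1).
  { intros v Hv.
    assert (Hc : forall c, 0 <= c <= 1 -> continuity_pt hlim c) by (intros; apply hlim_cont).
    destruct (continuity_ab_maj hlim 0 1 ltac:(lra) Hc) as [Mx [HMx1 HMx2]].
    destruct (continuity_ab_min hlim 0 1 ltac:(lra) Hc) as [mx [Hmx1 Hmx2]].
    assert (E1 : hlim Mx = 1).
    { apply herg_end; [exact HMx2|]. apply (herg_chain Mx 1 HMx2 (or_introl eq_refl)).
      intros c Hc'. specialize (HMx1 c Hc'). lra. }
    assert (E2 : hlim mx = 1).
    { apply herg_end; [exact Hmx2|]. apply (herg_chain mx (-1) Hmx2 (or_intror eq_refl)).
      intros c Hc'. specialize (Hmx1 c Hc'). lra. }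
    specialize (HMx1 v Hv). specialize (Hmx1 v Hv). lra. }
  destruct (base_Int_part u) as [H1 H2].
  replace u with ((u - IZR (Int_part u)) + IZR (Int_part u)) by ring.
  rewrite hlim_period. apply H01. lra.
Qed.

Lemma L2 u eps : 0 < eps -> exists N : nat, forall m1 m2,
  (m1 <= - Z.of_nat N)%Z -> (Z.of_nat N <= m2)%Z -> Rabs (hs u m1 m2 - 1) < eps.
Proof. intros He. rewrite <- (hlim_one u). apply hwin_eps, He. Qed.

Lemma zsum_plus f g m1 m2 : zsum (fun k => f k + g k) m1 m2 = zsum f m1 m2 + zsum g m1 m2.
Proof. apply wsum_plus. Qed.
Lemma zsum_minus f g m1 m2 : zsum (fun k => f k - g k) m1 m2 = zsum f m1 m2 - zsum g m1 m2.
Proof. apply wsum_minus. Qed.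
Lemma zsum_scal c f m1 m2 : zsum (fun k => c * f k) m1 m2 = c * zsum f m1 m2.
Proof. apply wsum_scal. Qed.

Lemma termA w s : cos (w * s) * sinc s =
  / (2 * PI) * (sn (PI - w) s - sn PI s) + / (2 * PI) * (sn (PI + w) s - sn PI s) + sinc s.
Proof.
  assert (HP := PI_RGT_0). unfold sn. destruct (Req_EM_T s 0) as [->|H].
  - rewrite Rmult_0_r, cos_0, sinc_0. field. lra.
  - rewrite sinc_nz by exact H.
    replace ((PI - w) * s) with (PI * s - w * s) by ring.
    replace ((PI + w) * s) with (PI * s + w * s) by ring.
    rewrite sin_minus, sin_plus. field. split; lra.
Qed.

Lemma termB w s : sin (w * s) * sinc s =
  / (2 * PI) * (cn (PI - w) s - cn PI s) - / (2 * PI) * (cn (PI + w) s - cn PI s).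
Proof.
  assert (HP := PI_RGT_0). unfold cn. destruct (Req_EM_T s 0) as [->|H].
  - rewrite Rmult_0_r, sin_0. ring.
  - rewrite sinc_nz by exact H.
    replace ((PI - w) * s) with (PI * s - w * s) by ring.
    replace ((PI + w) * s) with (PI * s + w * s) by ring.
    rewrite cos_minus, cos_plus. field. split; lra.
Qed.

Lemma coreA u w eps : - PI < w < PI -> 0 < eps -> exists M : Z, (0 <= M)%Z /\ forall m1 m2,
  (m1 <= - M)%Z -> (M <= m2)%Z ->
  Rabs (zsum (fun k => cos (w * (u - IZR k)) * sinc (u - IZR k)) m1 m2 - 1) < eps.
Proof.
  intros Hw He. assert (HP := PI_RGT_0).
  destruct (L1s_z u (PI - w) (eps * PI / 2) ltac:(lra) ltac:(nra)) as [M1 [HM1 H1]].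
  destruct (L1s_z u (PI + w) (eps * PI / 2) ltac:(lra) ltac:(nra)) as [M2 [HM2 H2]].
  destruct (L2 u (eps / 2) ltac:(lra)) as [N3 H3].
  exists (M1 + M2 + Z.of_nat N3)%Z. split; [lia|]. intros m1 m2 Hm1 Hm2.
  specialize (H1 m1 m2 ltac:(lia) ltac:(lia)). specialize (H2 m1 m2 ltac:(lia) ltac:(lia)).
  specialize (H3 m1 m2 ltac:(lia) ltac:(lia)).
  rewrite (zsum_ext _ (fun k => / (2 * PI) * (sn (PI - w) (u - IZR k) - sn PI (u - IZR k)) +
                              / (2 * PI) * (sn (PI + w) (u - IZR k) - sn PI (u - IZR k)) +
                              sinc (u - IZR k))) by (intros; apply termA).
  rewrite !zsum_plus, !zsum_scal, !zsum_minus. fold (hs u m1 m2).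
  set (Da := zsum (fun k => sn (PI - w) (u - IZR k)) m1 m2 - zsum (fun k => sn PI (u - IZR k)) m1 m2) in *.
  set (Db := zsum (fun k => sn (PI + w) (u - IZR k)) m1 m2 - zsum (fun k => sn PI (u - IZR k)) m1 m2) in *.
  assert (A : Rabs (/ (2 * PI) * Da) < eps / 4).
  { rewrite Rabs_mult, Rabs_right by (left; apply Rinv_0_lt_compat; lra).
    apply Rmult_lt_reg_l with (2 * PI); [lra|]. rewrite <- Rmult_assoc, Rinv_r, Rmult_1_l by lra. nra. }
  assert (B : Rabs (/ (2 * PI) * Db) < eps / 4).
  { rewrite Rabs_mult, Rabs_right by (left; apply Rinv_0_lt_compat; lra).
    apply Rmult_lt_reg_l with (2 * PI); [lra|]. rewrite <- Rmult_assoc, Rinv_r, Rmult_1_l by lra. nra. }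
  replace (/ (2 * PI) * Da + / (2 * PI) * Db + hs u m1 m2 - 1) with
    (/ (2 * PI) * Da + / (2 * PI) * Db + (hs u m1 m2 - 1)) by ring.
  eapply Rle_lt_trans; [apply Rabs_triang|].
  pose proof (Rabs_triang (/ (2 * PI) * Da) (/ (2 * PI) * Db)). lra.
Qed.

Lemma coreB u w eps : - PI < w < PI -> 0 < eps -> exists M : Z, (0 <= M)%Z /\ forall m1 m2,
  (m1 <= - M)%Z -> (M <= m2)%Z ->
  Rabs (zsum (fun k => sin (w * (u - IZR k)) * sinc (u - IZR k)) m1 m2) < eps.
Proof.
  intros Hw He. assert (HP := PI_RGT_0).
  destruct (L1c_z u (PI - w) (eps * PI) ltac:(lra) ltac:(nra)) as [M1 [HM1 H1]].
  destruct (L1c_z u (PI + w) (eps * PI) ltac:(lra) ltac:(nra)) as [M2 [HM2 H2]].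
  exists (M1 + M2)%Z. split; [lia|]. intros m1 m2 Hm1 Hm2.
  specialize (H1 m1 m2 ltac:(lia) ltac:(lia)). specialize (H2 m1 m2 ltac:(lia) ltac:(lia)).
  rewrite (zsum_ext _ (fun k => / (2 * PI) * (cn (PI - w) (u - IZR k) - cn PI (u - IZR k)) -
                              / (2 * PI) * (cn (PI + w) (u - IZR k) - cn PI (u - IZR k)))) by (intros; apply termB).
  rewrite !zsum_minus, !zsum_scal, !zsum_minus.
  set (Da := zsum (fun k => cn (PI - w) (u - IZR k)) m1 m2 - zsum (fun k => cn PI (u - IZR k)) m1 m2) in *.
  set (Db := zsum (fun k => cn (PI + w) (u - IZR k)) m1 m2 - zsum (fun k => cn PI (u - IZR k)) m1 m2) in *.
  assert (A : Rabs (/ (2 * PI) * Da) < eps / 2).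
  { rewrite Rabs_mult, Rabs_right by (left; apply Rinv_0_lt_compat; lra).
    apply Rmult_lt_reg_l with (2 * PI); [lra|]. rewrite <- Rmult_assoc, Rinv_r, Rmult_1_l by lra. nra. }
  assert (B : Rabs (/ (2 * PI) * Db) < eps / 2).
  { rewrite Rabs_mult, Rabs_right by (left; apply Rinv_0_lt_compat; lra).
    apply Rmult_lt_reg_l with (2 * PI); [lra|]. rewrite <- Rmult_assoc, Rinv_r, Rmult_1_l by lra. nra. }
  unfold Rminus at 1. eapply Rle_lt_trans; [apply Rabs_triang|]. rewrite Rabs_Ropp. lra.
Qed.

Lemma cos_Zper x z : cos (x + 2 * IZR z * PI) = cos x.
Proof.
  destruct z as [|q|q].
  - simpl. replace (x + 2 * 0 * PI) with x by ring. reflexivity.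
  - replace (IZR (Z.pos q)) with (INR (Pos.to_nat q)) by (rewrite INR_IZR_INZ, positive_nat_Z; reflexivity).
    apply cos_period.
  - replace x with ((x + 2 * IZR (Z.neg q) * PI) + 2 * INR (Pos.to_nat q) * PI) at 2.
    + rewrite cos_period. reflexivity.
    + rewrite INR_IZR_INZ, positive_nat_Z. replace (IZR (Z.neg q)) with (- IZR (Z.pos q)) by reflexivity. ring.
Qed.

Lemma sin_Zper x z : sin (x + 2 * IZR z * PI) = sin x.
Proof.
  destruct z as [|q|q].
  - simpl. replace (x + 2 * 0 * PI) with x by ring. reflexivity.
  - replace (IZR (Z.pos q)) with (INR (Pos.to_nat q)) by (rewrite INR_IZR_INZ, positive_nat_Z; reflexivity).
    apply sin_period.
  - replace x with ((x + 2 * IZR (Z.neg q) * PI) + 2 * INR (Pos.to_nat q) * PI) at 2.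
    + rewrite sin_period. reflexivity.
    + rewrite INR_IZR_INZ, positive_nat_Z. replace (IZR (Z.neg q)) with (- IZR (Z.pos q)) by reflexivity. ring.
Qed.

Lemma cexp2pi_Z x z : cexp2pi (x + IZR z) = cexp2pi x.
Proof.
  unfold cexp2pi. replace (2 * PI * (x + IZR z)) with (2 * PI * x + 2 * IZR z * PI) by ring.
  rewrite cos_Zper, sin_Zper. reflexivity.
Qed.

Lemma window_large p (M : Z) : exists N0 : nat, forall N : nat, (N0 <= N)%nat ->
  (wm1 N p <= - M)%Z /\ (M <= wm2 N p)%Z.
Proof.
  destruct (big_Z (IZR M + Rabs p)) as [K [HK0 HK]].
  exists (Z.to_nat K). intros N HN.
  assert (HNK : IZR K <= INR N).
  { rewrite INR_IZR_INZ. apply IZR_le. lia. }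
  pose proof (Rle_abs p). pose proof (Rle_abs (-p)). rewrite Rabs_Ropp in H0.
  unfold wm1, wm2, Zfloor. split.
  - assert (IZR M <= INR N + p) by lra. apply IZR_le_Int_part in H1. unfold Int_part in *. lia.
  - apply IZR_le_Int_part. lra.
Qed.

Lemma main1 (a b : R) (n : Z) (Ha : a = b + IZR n) (Hb1 : - (1/2) < b) (Hb2 : b < 1/2) t p :
  cyl_interp_is (fun s => cexp2pi (a * s)) t p (cexp2pi (b * t + IZR n * rho p)).
Proof.
  assert (HP := PI_RGT_0).
  set (u := t - p). set (w := 2 * PI * b).
  set (phi := 2 * PI * (b * t) + 2 * PI * (IZR n * p)).
  assert (Hw : - PI < w < PI) by (unfold w; split; nra).
  set (A := fun N => zsum (fun k => cos (w * (u - IZR k)) * sinc (u - IZR k)) (wm1 N p) (wm2 N p)).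
  set (B := fun N => zsum (fun k => sin (w * (u - IZR k)) * sinc (u - IZR k)) (wm1 N p) (wm2 N p)).
  assert (Harg : forall k, 2 * PI * (a * (p + IZR k)) = (phi - w * (u - IZR k)) + 2 * IZR (n * k) * PI).
  { intro k. rewrite Ha, mult_IZR. unfold phi, w, u. ring. }
  assert (Fst : forall N, fst (cyl_partial (fun s => cexp2pi (a * s)) t p N) = cos phi * A N + sin phi * B N).
  { intro N. rewrite cyl_fst. unfold A, B. rewrite <- !zsum_scal, <- zsum_plus.
    apply zsum_ext. intros k _. unfold cexp2pi; simpl fst.
    rewrite Harg, cos_Zper, cos_minus. replace (t - (p + IZR k)) with (u - IZR k) by (unfold u; ring). ring. }
  assert (Snd : forall N, snd (cyl_partial (fun s => cexp2pi (a * s)) t p N) = sin phi * A N - cos phi * B N).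
  { intro N. rewrite cyl_snd. unfold A, B. rewrite <- !zsum_scal, <- zsum_minus.
    apply zsum_ext. intros k _. unfold cexp2pi; simpl snd.
    rewrite Harg, sin_Zper, sin_minus. replace (t - (p + IZR k)) with (u - IZR k) by (unfold u; ring). ring. }
  assert (Targ : 2 * PI * (b * t + IZR n * rho p) = phi + 2 * IZR (- (n * Defs.Zfloor p)) * PI).
  { unfold rho, phi. rewrite opp_IZR, mult_IZR. ring. }
  assert (Conv : forall eps, 0 < eps -> exists N0 : nat, forall N, (N0 <= N)%nat ->
            Rabs (A N - 1) < eps /\ Rabs (B N) < eps).
  { intros eps He.
    destruct (coreA u w eps Hw He) as [M1 [HM1 H1]].
    destruct (coreB u w eps Hw He) as [M2 [HM2 H2]].
    destruct (window_large p (M1 + M2)) as [N0 HN0].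
    exists N0. intros N HN. destruct (HN0 N HN) as [W1 W2].
    split; [apply H1|apply H2]; lia. }
  assert (Hc := COS_bound phi). assert (Hs := SIN_bound phi).
  assert (Hc' : Rabs (cos phi) <= 1) by (apply Rabs_le; lra).
  assert (Hs' : Rabs (sin phi) <= 1) by (apply Rabs_le; lra).
  split.
  - intros eps He. destruct (Conv (eps/2) ltac:(lra)) as [N0 HN0]. exists N0. intros N HN.
    destruct (HN0 N HN) as [HA HB]. unfold R_dist. rewrite Fst.
    unfold cexp2pi; simpl fst. rewrite Targ, cos_Zper.
    replace (cos phi * A N + sin phi * B N - cos phi) with (cos phi * (A N - 1) + sin phi * B N) by ring.
    eapply Rle_lt_trans; [apply Rabs_triang|]. rewrite !Rabs_mult.
    assert (Rabs (cos phi) * Rabs (A N - 1) <= 1 * Rabs (A N - 1)).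
    { apply Rmult_le_compat_r; [apply Rabs_pos|lra]. }
    assert (Rabs (sin phi) * Rabs (B N) <= 1 * Rabs (B N)).
    { apply Rmult_le_compat_r; [apply Rabs_pos|lra]. }
    lra.
  - intros eps He. destruct (Conv (eps/2) ltac:(lra)) as [N0 HN0]. exists N0. intros N HN.
    destruct (HN0 N HN) as [HA HB]. unfold R_dist. rewrite Snd.
    unfold cexp2pi; simpl snd. rewrite Targ, sin_Zper.
    replace (sin phi * A N - cos phi * B N - sin phi) with (sin phi * (A N - 1) + - (cos phi * B N)) by ring.
    eapply Rle_lt_trans; [apply Rabs_triang|]. rewrite Rabs_Ropp, !Rabs_mult.
    assert (Rabs (sin phi) * Rabs (A N - 1) <= 1 * Rabs (A N - 1)).
    { apply Rmult_le_compat_r; [apply Rabs_pos|lra]. }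
    assert (Rabs (cos phi) * Rabs (B N) <= 1 * Rabs (B N)).
    { apply Rmult_le_compat_r; [apply Rabs_pos|lra]. }
    lra.
Qed.

Theorem mainTheorem3 (a b : R) (n : Z)
  (Ha : a = b + IZR n) (Hb1 : - (1/2) < b) (Hb2 : b < 1/2) :
  (forall t p : R,
     cyl_interp_is (fun s => cexp2pi (a * s)) t p
       (cexp2pi (b * t + IZR n * rho p))) /\
  (forall v alpha t : R,
     cyl_interp_is (fun s => cexp2pi (a * s)) (v * t) (alpha * t)
       (cexp2pi ((b * v + IZR n * alpha) * t))).
Proof.
  split.
  - intros t p. apply main1; assumption.
  - intros v alpha t.
    replace ((b * v + IZR n * alpha) * t) with
      (b * (v * t) + IZR n * rho (alpha * t) + IZR (n * Defs.Zfloor (alpha * t))).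
    + rewrite cexp2pi_Z. apply main1; assumption.
    + unfold rho. rewrite mult_IZR. ring.
Qed.
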